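(* Let $k\in\mathbb{N}$, $P$ the uniform distribution on $[0,1]$, $\beta=\{\frac jk:1\leq j\leq k\}$, and $J_{k,j}=[\frac{j-1}k,\frac jk]$ for $1\leq j\leq k$. Let $n\geq k$, let $\alpha_n$ be a conditional optimal set of $n$-points for $P$ with respect to $\beta$, and put $n_j=\mathrm{card}(\alpha_n\cap J_{k,j})$. Then for $2\leq i<j\leq k$, $|n_i-n_j|\in\{0,1\}$.
   Context: For a Borel probability measure $P$ on $\mathbb{R}$ and finite $\beta$ with $\mathrm{card}(\beta)=r$, for $n\ge r$, $V_n=\inf\{\int\min_{a\in\alpha\cup\beta}(x-a)^2dP(x):\mathrm{card}(\alpha)\le n-r\}$; a set $\alpha\cup\beta$ attaining the infimum, with each point of $\beta$ having a Voronoi region of positive $P$-measure, is a conditional optimal set of $n$-points with respect to $\beta$ (it contains $\beta$). *)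

(* Defs.v *)
From HB Require Import structures.
From mathcomp Require Import all_boot all_order all_algebra.
From mathcomp Require Import all_classical all_reals all_analysis.
Set Implicit Arguments. Unset Strict Implicit. Unset Printing Implicit Defensive.
Import Order.TTheory GRing.Theory Num.Theory.
Local Open Scope classical_set_scope.
Local Open Scope ring_scope.

(* Finite subsets of R are represented by duplicate-free sequences. *)

(* min_{a in g} (x - a)^2 (g is always nonempty where this is used; the
   head term only duplicates an element of g). *)
Definition dist2 (R : realType) (g : seq R) (x : R) : R :=
  foldr (fun a m => Num.min ((x - a) ^+ 2) m) ((x - head 0 g) ^+ 2) g.

Definition quant_err (R : realType) (P : probability (measurableTypeR R) R) (g : seq R) : \bar R :=
  (\int[P]_x (dist2 g x)%:E)%E.

Definition voronoi (R : realType) (g : seq R) (b : R) : set R :=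
  [set x | forall a, a \in g -> `|x - b| <= `|x - a|].

Definition cond_opt_set (R : realType) (P : probability (measurableTypeR R) R) (beta : seq R)
    (n : nat) (gamma : seq R) : Prop :=
  [/\ uniq gamma,
      exists alpha : seq R, [/\ uniq alpha, (size alpha <= n - size beta)%N
                                & gamma =i alpha ++ beta],
      (forall alpha' : seq R, uniq alpha' -> (size alpha' <= n - size beta)%N ->
          (quant_err P gamma <= quant_err P (alpha' ++ beta))%E)
    & (forall b, b \in beta -> (0 < P (voronoi gamma b))%E)].

Definition beta_k (R : realType) (k : nat) : seq R :=
  [seq (j%:R / k%:R) | j <- iota 1 k].

Definition inJ (R : realType) (k j : nat) (x : R) : bool :=
  ((j.-1)%:R / k%:R <= x) && (x <= j%:R / k%:R).

Definition cardJ (R : realType) (k j : nat) (gamma : seq R) : nat :=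
  size [seq x <- gamma | inJ k j x].

Definition unif01 (R : realType) : probability (measurableTypeR R) R := uniform_prob (@ltr01 R).

(* Main.v *)
Require Import Defs.
From HB Require Import structures.
From mathcomp Require Import all_boot all_order all_algebra.
From mathcomp Require Import all_classical all_reals all_analysis.
From mathcomp Require Import ring lra.
From mathcomp Require Import measurable_realfun zify.
Import Order.TTheory GRing.Theory Num.Theory.
Import numFieldNormedType.Exports.
Local Open Scope classical_set_scope.
Local Open Scope ring_scope.
Section P1.
Variable R : realType.
Implicit Types (g s : seq R) (x a : R).

Let F (x : R) := fun a m => Num.min ((x - a) ^+ 2) m.

Lemma foldr_min_le x i g a : a \in g -> foldr (F x) i g <= (x - a) ^+ 2.
Proof.
elim: g => //= b g IH; rewrite inE => /orP[/eqP->|ag].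
  by rewrite /F ge_min lexx.
by rewrite /F ge_min (IH ag) orbT.
Qed.

Lemma foldr_min_att x i g : foldr (F x) i g = i \/ exists2 a, a \in g & foldr (F x) i g = (x - a) ^+ 2.
Proof.
elim: g => [|b g IH] /=; first by left.
have [h|h] := leP ((x - b) ^+ 2) (foldr (F x) i g).
  by right; exists b; rewrite ?inE ?eqxx // /F min_l.
have -> : F x b (foldr (F x) i g) = foldr (F x) i g by rewrite /F min_r // ltW.
case: IH => [->|[a ag ->]]; first by left.
by right; exists a => //; rewrite inE ag orbT.
Qed.

Lemma dist2_le g x a : a \in g -> dist2 g x <= (x - a) ^+ 2.
Proof. exact: foldr_min_le. Qed.

Lemma dist2_att g x : g != [::] -> exists2 a, a \in g & dist2 g x = (x - a) ^+ 2.
Proof.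
case: g => // b g _; case: (foldr_min_att x ((x - head 0 (b :: g)) ^+ 2) (b :: g)).
  by rewrite /dist2 => ->; exists b => //; rewrite inE eqxx.
by case=> a ag E; exists a.
Qed.

Lemma dist2_ge0 g x : 0 <= dist2 g x.
Proof.
rewrite /dist2; case: (foldr_min_att x ((x - head 0 g) ^+ 2) g) => [->|[a _ ->]];
  exact: sqr_ge0.
Qed.

Lemma dist2_geP g x m : g != [::] -> (forall a, a \in g -> m <= (x - a) ^+ 2) -> m <= dist2 g x.
Proof. by move=> /(@dist2_att g x) [a ag ->]; apply. Qed.

Lemma dist2_eq g1 g2 x : g1 != [::] -> g2 != [::] ->
  (forall a, a \in g1 -> exists2 b, b \in g2 & (x - b) ^+ 2 <= (x - a) ^+ 2) ->
  (forall a, a \in g2 -> exists2 b, b \in g1 & (x - b) ^+ 2 <= (x - a) ^+ 2) ->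
  dist2 g1 x = dist2 g2 x.
Proof.
move=> n1 n2 h12 h21; apply/le_anti/andP; split.
  apply: dist2_geP => // a /h21 [b bg1 hb]; apply: le_trans hb; exact: dist2_le.
apply: dist2_geP => // a /h12 [b bg2 hb]; apply: le_trans hb; exact: dist2_le.
Qed.

Lemma msq (D : set R) (c : R) : measurable_fun D (fun x : R => (x - c) ^+ 2).
Proof.
apply: measurable_realfun.measurable_funX.
apply: measurable_realfun.measurable_funB => //; exact: measurable_cst.
Qed.

Lemma dist2_meas (D : set R) g : measurable_fun D (dist2 g).
Proof.
rewrite /dist2; move: (head 0 g) => h; elim: g => [|b g IH] /=; first exact: msq.
apply: measurable_realfun.measurable_minr; [exact: msq | exact: IH].
Qed.

Notation mu := (@lebesgue_measure R).
Definition Iab (a b : R) (f : R -> R) : \bar R := (\int[mu]_(x in `[a, b]) (f x)%:E)%E.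

Lemma mE (D : set R) (f : R -> R) : measurable_fun D f -> measurable_fun D (fun x => (f x)%:E).
Proof. by move=> mf; apply/measurable_EFinP. Qed.

Lemma Iab_split a b c (f : R -> R) : a <= b -> b <= c -> measurable_fun setT f -> (forall x, 0 <= f x) ->
  Iab a c f = (Iab a b f + Iab b c f)%E.
Proof.
move=> ab bc mf f0; rewrite /Iab.
rewrite (@itv_bndbnd_setU _ _ _ (BLeft b)); first last.
- by rewrite bnd_simp.
- by rewrite bnd_simp.
rewrite ge0_integral_setU //=.
- rewrite integral_itv_bndo_bndc //; apply: mE; exact: measurable_funS mf.
- apply: mE; exact: measurable_funS mf.
- by move=> x _; rewrite lee_fin.
- apply/disj_setPS => x [] /=; rewrite !in_itv /= => /andP[_ xb] /andP[bx _].
  by move: (lt_le_trans xb bx); rewrite ltxx.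
Qed.

Lemma Iab_le a b (f g : R -> R) : measurable_fun setT f -> measurable_fun setT g -> (forall x, 0 <= f x) ->
  (forall x, a <= x <= b -> f x <= g x) -> (Iab a b f <= Iab a b g)%E.
Proof.
move=> mf mg f0 fg; apply: ge0_le_integral => //=.
all: try (by move=> x _; rewrite lee_fin).
all: try (apply: mE; exact: measurable_funS mf).
all: try (apply: mE; exact: measurable_funS mg).
all: try (by move=> x; rewrite /= in_itv /= => xab; rewrite lee_fin fg).
Qed.

Lemma Iab_eq a b (f g : R -> R) : (forall x, a <= x <= b -> f x = g x) -> Iab a b f = Iab a b g.
Proof.
by move=> fg; apply: eq_integral => x; rewrite inE /= in_itv /= => xab; rewrite fg.
Qed.

Lemma Iab_ge0 a b (f : R -> R) : (forall x, 0 <= f x) -> (0 <= Iab a b f)%E.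
Proof. by move=> f0; apply: integral_ge0 => x _; rewrite lee_fin. Qed.

Lemma Iab_xx a (f : R -> R) : Iab a a f = 0%E.
Proof. by rewrite /Iab set_itv1 integral_set1. Qed.

Lemma int_sq (p a b : R) : a <= b ->
  Iab a b (fun x => (x - p) ^+ 2) = (((b - p) ^+ 3 - (a - p) ^+ 3) / 3)%:E.
Proof.
rewrite le_eqVlt => /predU1P[->|ab]; first by rewrite Iab_xx subrr mul0r.
pose F3 := fun x : R => (x - p) ^+ 3 / 3.
have dF3 : forall x : R, is_derive x 1 F3 ((x - p) ^+ 2).
  move=> x; rewrite /F3.
  apply: is_derive_eq.
  have sc : forall u v : R, u *: v = u * v := fun _ _ => erefl.
  rewrite /= !sc; rewrite !subr0 !mulr0 ?addr0 ?add0r !mulr1; field; done.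
rewrite /Iab (@continuous_FTC2 _ _ F3) //.
- by rewrite /F3 -EFinB mulrBl.
- apply: continuous_subspaceT => x.
  apply: differentiable_continuous.
    rewrite -derivable1_diffP. exact: ex_derive.
- split.
  + move=> x _; exact: ex_derive.
  + apply: cvg_at_right_filter. apply: differentiable_continuous.
    rewrite -derivable1_diffP. exact: ex_derive.
  + apply: cvg_at_left_filter. apply: differentiable_continuous.
    rewrite -derivable1_diffP. exact: ex_derive.
- move=> x _. rewrite derive1E. exact: derive_val.
Qed.

Definition g2 (p q x : R) := Num.min ((x - p) ^+ 2) ((x - q) ^+ 2).

Lemma g2_meas p q : measurable_fun setT (g2 p q).
Proof. apply: measurable_realfun.measurable_minr; exact: msq. Qed.

Lemma int_g2 p q : p <= q -> Iab p q (g2 p q) = ((q - p) ^+ 3 / 12)%:E.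
Proof.
move=> pq; set m := (p + q) / 2.
have pm : p <= m by rewrite /m; lra.
have mq : m <= q by rewrite /m; lra.
rewrite (@Iab_split p m q) //; last 2 first.
- exact: g2_meas.
- by move=> x; rewrite /g2 le_min !sqr_ge0.
rewrite (@Iab_eq p m _ (fun x => (x - p) ^+ 2)); last first.
  move=> x /andP[px xm]; rewrite /g2 min_l //.
  rewrite /m in xm; nra.
rewrite (@Iab_eq m q _ (fun x => (x - q) ^+ 2)); last first.
  move=> x /andP[mx xq]; rewrite /g2 min_r //.
  rewrite /m in mx; nra.
rewrite !int_sq // -EFinD; congr EFin; rewrite /m; field; done.
Qed.


Lemma exists_max (P : pred R) s : has P s ->
  exists q, [/\ q \in s, P q & forall y, y \in s -> P y -> y <= q].
Proof.
elim: s => //= b s IH H.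
case hs: (has P s).
  have [q [qs Pq qm]] := IH hs.
  case Pb: (P b); last first.
    exists q; split => //; first by rewrite inE qs orbT.
    by move=> y; rewrite inE => /orP[/eqP->|ys]; [rewrite Pb | exact: qm].
  case: (leP b q) => bq.
    exists q; split => //; first by rewrite inE qs orbT.
    by move=> y; rewrite inE => /orP[/eqP->|ys] //; exact: qm.
  exists b; split => //; first by rewrite inE eqxx.
  move=> y; rewrite inE => /orP[/eqP->|ys] Py //.
  exact: le_trans (qm y ys Py) (ltW bq).
have Pb : P b by move: H; rewrite hs orbF.
exists b; split => //; first by rewrite inE eqxx.
move=> y; rewrite inE => /orP[/eqP->|ys] Py //.
by move/hasPn: hs => /(_ y ys); rewrite Py.
Qed.

Lemma count2 (P1 P2 Q : pred R) s : (forall x, P1 x + P2 x <= Q x)%N ->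
  (count P1 s + count P2 s <= count Q s)%N.
Proof.
move=> h; elim: s => //= b s IH.
by rewrite addnACA; apply: leq_add.
Qed.

Lemma noint s c d : c <= d -> c \in s -> d \in s ->
  (forall y, y \in s -> ~~ ((c < y) && (y < d))) ->
  (((d - c) ^+ 3 / 12)%:E <= Iab c d (dist2 s))%E.
Proof.
move=> cd cs ds hn; rewrite -int_g2 //; apply: Iab_le.
- exact: g2_meas.
- exact: dist2_meas.
- by move=> x; rewrite /g2 le_min !sqr_ge0.
move=> x /andP[cx xd]; apply: dist2_geP; first by case: (s) cs.
move=> a /hn; rewrite negb_and -!leNgt => /orP[ac|da].
  rewrite /g2 ge_min; apply/orP; left; nra.
rewrite /g2 ge_min; apply/orP; right; nra.
Qed.

Lemma alg_step (M A B : R) : 1 <= M -> 0 <= A -> 0 <= B ->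
  (A + B) ^+ 3 / (12 * (M + 1) ^+ 2) <= A ^+ 3 / (12 * M ^+ 2) + B ^+ 3 / 12.
Proof.
move=> M1 A0 B0.
rewrite -subr_ge0.
have -> : A ^+ 3 / (12 * M ^+ 2) + B ^+ 3 / 12 - (A + B) ^+ 3 / (12 * (M + 1) ^+ 2)
  = (A - M * B) ^+ 2 * ((2 * M + 1) * A + (M ^+ 2 + 2 * M) * B) / (12 * M ^+ 2 * (M + 1) ^+ 2).
  field; apply/andP; split; apply/negP => /eqP; nra.
apply: divr_ge0; last by nra.
apply: mulr_ge0; first exact: sqr_ge0.
nra.
Qed.

Lemma lowerB (m : nat) s c d : c <= d -> c \in s -> d \in s ->
  (count (fun y : R => (c < y)%R && (y < d)%R) s <= m)%N ->
  (((d - c) ^+ 3 / (12 * (m.+1)%:R ^+ 2))%:E <= Iab c d (dist2 s))%E.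
Proof.
move=> + cs; elim: m d => [|m IH] d cd ds hc.
  have hn : forall y, y \in s -> ~~ ((c < y) && (y < d)).
    apply/hasPn; rewrite has_count -leqNgt; exact: hc.
  apply: le_trans (@noint s c d cd cs ds hn).
  by rewrite lee_fin expr1n mulr1.
set P := (fun y => (c < y) && (y < d)).
have c3 : 0 <= (d - c) ^+ 3 by apply: exprn_ge0; rewrite subr_ge0.
case hs: (has P s); last first.
  have hn : forall y, y \in s -> ~~ ((c < y) && (y < d)) by apply/hasPn; rewrite hs.
  apply: le_trans (@noint s c d cd cs ds hn).
  rewrite lee_fin ler_pdivrMr; last by rewrite mulr_gt0 // exprn_gt0 // ltr0n.
  have N1 : 1 <= (m.+2)%:R ^+ 2 :> R by rewrite -natrX ler1n expn_gt0.
  have -> : (d - c) ^+ 3 / 12 * (12 * (m.+2)%:R ^+ 2) = (d - c) ^+ 3 * (m.+2)%:R ^+ 2 by field.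
  by rewrite ler_peMr.
have [q [qs /andP[cq qd] qm]] := @exists_max P s hs.
have hcq : (count (fun y : R => (c < y)%R && (y < q)%R) s <= m)%N.
  have h2 := @count2 (fun y : R => (c < y)%R && (y < q)%R) (pred1 q) P s.
  have : (0 < count (pred1 q) s)%N by rewrite -has_count has_pred1.
  suff: (count (fun y : R => (c < y)%R && (y < q)%R) s + count (pred1 q) s <= m.+1)%N by lia.
  apply: leq_trans hc; apply: h2 => x /=.
  case: eqP => [->|_]; first by rewrite ltxx andbF /P cq qd.
  rewrite addn0; case/boolP: ((c < x) && (x < q)) => // /andP[cx xq].
  by rewrite /P cx (lt_trans xq qd).
have IHq := IH q (ltW cq) qs hcq.
have Nq := @noint s q d (ltW qd) qs ds.
rewrite (@Iab_split c q d) //; last 3 first.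
- exact: ltW.
- exact: dist2_meas.
- exact: dist2_ge0.
apply: le_trans; last first.
  apply: leeD; first exact: IHq.
  apply: Nq => y ys; apply/negP => /andP[qy yd].
  have := qm y ys; rewrite /P (lt_trans cq qy) yd => /(_ isT).
  by rewrite leNgt qy.
rewrite -EFinD lee_fin.
have -> : d - c = (q - c) + (d - q) by ring.
have -> : (m.+2)%:R = (m.+1)%:R + 1 :> R by rewrite [in LHS]mulrSr.
apply: alg_step.
- by rewrite ler1n.
- by rewrite subr_ge0 ltW.
- by rewrite subr_ge0 ltW.
exact: ltW.
Qed.

Lemma upperC (f : R -> R) c h (M : nat) : 0 <= h -> measurable_fun setT f -> (forall x, 0 <= f x) ->
  (forall t, (t < M)%N -> forall x, (c + t%:R * h <= x <= c + t.+1%:R * h)%R ->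
      f x <= g2 (c + t%:R * h) (c + t.+1%:R * h) x) ->
  (Iab c (c + M%:R * h) f <= (M%:R * h ^+ 3 / 12)%:E)%E.
Proof.
move=> h0 mf f0; elim: M => [|M IH] hM.
  by rewrite !mul0r addr0 Iab_xx.
have hMS : c + M%:R * h <= c + M.+1%:R * h.
  rewrite mulrSr; lra.
have hM0 : c <= c + M%:R * h.
  have : 0 <= M%:R * h :> R by rewrite mulr_ge0.
  lra.
rewrite (@Iab_split c (c + M%:R * h) _ f hM0 hMS mf f0).
have -> : (M.+1%:R * h ^+ 3 / 12) = (M%:R * h ^+ 3 / 12) + ((c + M.+1%:R * h) - (c + M%:R * h)) ^+ 3 / 12.
  rewrite [in LHS]mulrSr; field; done.
rewrite EFinD; apply: leeD.
  by apply: IH => t tM; apply: hM; apply: ltn_trans tM _.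
rewrite -int_g2 //; apply: Iab_le => //.
- exact: g2_meas.
- by move=> x; apply: hM.
Qed.


Lemma polyineq (s t : R) : 1 <= s -> s + 1 <= t ->
  (2 * t + 1) * (s ^+ 2 * (s + 1) ^+ 2) < (2 * s + 1) * (t ^+ 2 * (t + 1) ^+ 2).
Proof.
move=> s1 st.
set w := t - s.
have w1 : 1 <= w by rewrite /w; lra.
have -> : t = s + w by rewrite /w; ring.
set P := s * (s + 1).
set Q := (s + w) * (s + w + 1).
have eP : s ^+ 2 * (s + 1) ^+ 2 = P ^+ 2 by rewrite /P; ring.
have eQ : (s + w) ^+ 2 * (s + w + 1) ^+ 2 = Q ^+ 2 by rewrite /Q; ring.
rewrite eP eQ.
have P0 : 0 < P by rewrite /P; nra.
have hQ : w * (2 * s + 1) <= Q - P by rewrite /Q /P; nra.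
have hQ2 : 0 < Q + P by nra.
have h1 : (2 * s + 1) * (w * (2 * s + 1)) * (2 * P) <= (2 * s + 1) * (Q ^+ 2 - P ^+ 2).
  have -> : Q ^+ 2 - P ^+ 2 = (Q - P) * (Q + P) by ring.
  rewrite -mulrA; apply: ler_wpM2l; first lra.
  apply: ler_pM => //; [nra | lra | nra].
have h2 : 2 * w * P ^+ 2 < (2 * s + 1) * (w * (2 * s + 1)) * (2 * P).
  have hP : P < (2 * s + 1) ^+ 2 by rewrite /P; nra.
  rewrite -subr_gt0.
  have -> : (2 * s + 1) * (w * (2 * s + 1)) * (2 * P) - 2 * w * P ^+ 2 = 2 * w * P * ((2 * s + 1) ^+ 2 - P) by ring.
  apply: mulr_gt0; last by rewrite subr_gt0.
  apply: mulr_gt0 => //; lra.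
nra.
Qed.

Lemma conv (s t : R) : 1 <= s -> s + 1 <= t ->
  (t ^+ 2)^-1 + ((s + 1) ^+ 2)^-1 < ((t + 1) ^+ 2)^-1 + (s ^+ 2)^-1.
Proof.
move=> s1 st; rewrite -subr_gt0.
have -> : ((t + 1) ^+ 2)^-1 + (s ^+ 2)^-1 - ((t ^+ 2)^-1 + ((s + 1) ^+ 2)^-1) =
  ((2 * s + 1) * (t ^+ 2 * (t + 1) ^+ 2) - (2 * t + 1) * (s ^+ 2 * (s + 1) ^+ 2)) /
  (s ^+ 2 * (s + 1) ^+ 2 * (t ^+ 2 * (t + 1) ^+ 2)).
  field; rewrite !gt_eqF //; lra.
apply: divr_gt0; first by rewrite subr_gt0; exact: polyineq.
apply: mulr_gt0; apply: mulr_gt0; apply: exprn_gt0; lra.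
Qed.

Variable k : nat.
Hypothesis k1 : (1 <= k)%N.
Definition pt (t : nat) : R := t%:R / k%:R.
Definition L : R := k%:R^-1.

Lemma k0 : 0 < k%:R :> R.
Proof. by rewrite ltr0n. Qed.

Lemma pt_lt (a b : nat) : (pt a < pt b) = (a < b)%N.
Proof. by rewrite /pt ltr_pM2r ?invr_gt0 ?k0 // ltr_nat. Qed.

Lemma pt_le (a b : nat) : (pt a <= pt b) = (a <= b)%N.
Proof. by rewrite /pt ler_pM2r ?invr_gt0 ?k0 // ler_nat. Qed.

Lemma pt0 : pt 0 = 0.
Proof. by rewrite /pt mul0r. Qed.

Lemma ptk : pt k = 1.
Proof. by rewrite /pt divff // gt_eqF // k0. Qed.

Lemma ptS t : pt t.+1 = pt t + L.
Proof. by rewrite /pt /L mulrSr mulrDl mul1r. Qed.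

Lemma beta_mem t : (1 <= t <= k)%N -> pt t \in beta_k R k.
Proof.
move=> ht; apply/mapP; exists t => //.
by rewrite mem_iota; lia.
Qed.

Definition op (u : nat) (x : R) : bool := (pt u.-1 < x) && (x < pt u).

Lemma beta_not_open u y : (1 <= u)%N -> y \in beta_k R k -> ~~ op u y.
Proof.
move=> u1 /mapP [t _ ->]; rewrite /op -/(pt t) !pt_lt; apply/negP => /andP[]; lia.
Qed.


Lemma qe_eq s : quant_err (unif01 R) s = Iab 0 1 (dist2 s).
Proof.
rewrite /quant_err /unif01 integral_uniform //=.
- by rewrite subr0 invr1 mul1e.
- apply/measurable_EFinP; exact: dist2_meas.
- by move=> x; rewrite lee_fin dist2_ge0.
Qed.

Lemma count3eq (P P1 P2 P3 : pred R) s : (forall x, (P x = P1 x + P2 x + P3 x :> nat)%N) ->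
  count P s = (count P1 s + count P2 s + count P3 s)%N.
Proof.
move=> h; elim: s => //= b s ->; rewrite h; lia.
Qed.

Lemma count3 (P1 P2 P3 Q : pred R) s : (forall x, P1 x + P2 x + P3 x <= Q x)%N ->
  (count P1 s + count P2 s + count P3 s <= count Q s)%N.
Proof.
move=> h; elim: s => //= b s IH; have := h b; lia.
Qed.

Lemma escape c d a x : c < a < d -> ~~ ((c < x) && (x < d)) ->
  (x - c) ^+ 2 <= (x - a) ^+ 2 \/ (x - d) ^+ 2 <= (x - a) ^+ 2.
Proof.
move=> /andP[ca ad]; rewrite negb_and -!leNgt => /orP[xc|dx].
  left; nra.
right; nra.
Qed.

Lemma swap_pts (s1 s2 : seq R) x cu du cv dv :
  cu \in s2 -> du \in s2 -> cv \in s2 -> dv \in s2 ->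
  (forall a, a \in s1 -> [\/ a \in s2, cu < a < du | cv < a < dv]) ->
  ~~ ((cu < x) && (x < du)) -> ~~ ((cv < x) && (x < dv)) ->
  forall a, a \in s1 -> exists2 b, b \in s2 & (x - b) ^+ 2 <= (x - a) ^+ 2.
Proof.
move=> cu2 du2 cv2 dv2 h xu xv a /h [as2|au|av].
- by exists a.
- by case: (@escape cu du a x au xu) => hb; [exists cu | exists du].
- by case: (@escape cv dv a x av xv) => hb; [exists cv | exists dv].
Qed.

Lemma split5 (f : R -> R) a1 a2 a3 a4 : measurable_fun setT f -> (forall x, 0 <= f x) ->
  0 <= a1 -> a1 <= a2 -> a2 <= a3 -> a3 <= a4 -> a4 <= 1 ->
  Iab 0 1 f = ((Iab 0 a1 f + Iab a2 a3 f + Iab a4 1 f) + (Iab a1 a2 f + Iab a3 a4 f))%E.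
Proof.
move=> mf f0 h1 h2 h3 h4 h5.
rewrite (@Iab_split 0 a1 1) //; last by lra.
rewrite (@Iab_split a1 a2 1) //; last by lra.
rewrite (@Iab_split a2 a3 1) //; last by lra.
rewrite (@Iab_split a3 a4 1) //.
by rewrite (addeCA (Iab a1 a2 f) (Iab a2 a3 f)) (addeC (Iab a3 a4 f) (Iab a4 1 f)) (addeCA (Iab a1 a2 f) (Iab a4 1 f)) -!addeA.
Qed.


Lemma notop a b x : x <= a \/ b <= x -> ~~ ((a < x) && (x < b)).
Proof. by case=> h; apply/negP => /andP[h1 h2]; lra. Qed.

Lemma key n gamma (u v Gu Gv : nat) :
  cond_opt_set (unif01 R) (beta_k R k) n gamma ->
  (2 <= u)%N -> (u < v)%N -> (v <= k)%N ->
  (1 <= Gu)%N -> (1 <= Gv)%N ->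
  (Gu + Gv = count (op u) gamma + count (op v) gamma + 2)%N ->
  (Gu%:R ^+ 2 : R)^-1 + (Gv%:R ^+ 2 : R)^-1 <
    (((count (op u) gamma).+1)%:R ^+ 2)^-1 + (((count (op v) gamma).+1)%:R ^+ 2)^-1 ->
  False.
Proof.
move=> H u2 uv vk Gu1 Gv1 hG hlt.
have u0 : (0 < u)%N by lia.
have v0 : (0 < v)%N by lia.
have n1 : (1 <= u.-1 <= k)%N by lia.
have n2 : (1 <= u <= k)%N by lia.
have n3 : (1 <= v.-1 <= k)%N by lia.
have n4 : (1 <= v <= k)%N by lia.
have n5 : (u.-1 < u)%N by lia.
have n6 : (u <= v.-1)%N by lia.
have n7 : (v.-1 < v)%N by lia.
have n8 : (Gu.-1 + Gv.-1 = count (op u) gamma + count (op v) gamma)%N by lia.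
move: H => [ug [alpha [ua sa ga]] H3 _].
set mu_ := count (op u) gamma in hG hlt; set mv := count (op v) gamma in hG hlt.
set beta := beta_k R k in sa ga H3.
have hbg : {subset beta <= gamma} by move=> y yb; rewrite ga mem_cat yb orbT.
set cu := pt u.-1; set du := pt u; set cv := pt v.-1; set dv := pt v.
have cub : cu \in beta by apply: beta_mem.
have dub : du \in beta by apply: beta_mem.
have cvb : cv \in beta by apply: beta_mem.
have dvb : dv \in beta by apply: beta_mem.
have c0 : 0 <= cu by rewrite -pt0 pt_le.
have cdu : cu < du by rewrite pt_lt.
have dcv : du <= cv by rewrite pt_le.
have cdv : cv < dv by rewrite pt_lt.
have d1 : dv <= 1 by rewrite -ptk pt_le; case/andP: n4.
have L0 : 0 < L by rewrite /L invr_gt0 k0.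
have duL : du = cu + L by rewrite /du /cu -ptS prednK.
have dvL : dv = cv + L by rewrite /dv /cv -ptS prednK.
have opu x : op u x = (cu < x) && (x < du) by [].
have opv x : op v x = (cv < x) && (x < dv) by [].
have Gu0 : 0 < Gu%:R :> R by rewrite ltr0n.
have Gv0 : 0 < Gv%:R :> R by rewrite ltr0n.
pose hu := L / Gu%:R; pose hv := L / Gv%:R.
have hu0 : 0 < hu by rewrite /hu divr_gt0.
have hv0 : 0 < hv by rewrite /hv divr_gt0.
have Guh : du = cu + Gu%:R * hu by rewrite duL /hu; congr (_ + _); field; rewrite gt_eqF.
have Gvh : dv = cv + Gv%:R * hv by rewrite dvL /hv; congr (_ + _); field; rewrite gt_eqF.
pose Eu := [seq cu + t%:R * hu | t <- iota 1 Gu.-1].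
pose Ev := [seq cv + t%:R * hv | t <- iota 1 Gv.-1].
pose rest := [seq x <- gamma | ~~ op u x && ~~ op v x && (x \notin beta)].
pose alpha0 := rest ++ Eu ++ Ev.
pose sN := undup alpha0 ++ beta.
have memN a : a \in sN -> [\/ a \in rest, a \in Eu, a \in Ev | a \in beta].
  rewrite mem_cat mem_undup !mem_cat.
  by case/orP => [/orP[|/orP[|]]|] ?; [apply: Or41|apply: Or42|apply: Or43|apply: Or44].
have restN a : a \in rest -> a \in sN by move=> ?; rewrite mem_cat mem_undup !mem_cat; apply/orP; left; apply/orP; left.
have EuN a : a \in Eu -> a \in sN by move=> ?; rewrite mem_cat mem_undup !mem_cat; apply/orP; left; apply/orP; right; apply/orP; left.
have EvN a : a \in Ev -> a \in sN by move=> ?; rewrite mem_cat mem_undup !mem_cat; apply/orP; left; apply/orP; right; apply/orP; right.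
have betaN a : a \in beta -> a \in sN by move=> ?; rewrite mem_cat; apply/orP; right.
have Euop a : a \in Eu -> op u a.
  case/mapP => t; rewrite mem_iota => ht ->; rewrite opu duL.
  have t0 : 0 < t%:R * hu by rewrite mulr_gt0 // ltr0n; clear -ht; lia.
  have tL : t%:R * hu < L.
    rewrite /hu mulrCA gtr_pMr // ltr_pdivrMr // mul1r ltr_nat; clear -ht; lia.
  apply/andP; split; lra.
have Evop a : a \in Ev -> op v a.
  case/mapP => t; rewrite mem_iota => ht ->; rewrite opv dvL.
  have t0 : 0 < t%:R * hv by rewrite mulr_gt0 // ltr0n; clear -ht; lia.
  have tL : t%:R * hv < L.
    rewrite /hv mulrCA gtr_pMr // ltr_pdivrMr // mul1r ltr_nat; clear -ht; lia.
  apply/andP; split; lra.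
have ptsu t : (t <= Gu)%N -> cu + t%:R * hu \in sN.
  move=> tG; case: (ltnP 0 t) => t0; last first.
    have -> : t = 0%N by clear -t0; lia.
    by rewrite mul0r addr0 betaN.
  case: (ltnP t Gu) => tG'.
    by apply: EuN; apply/mapP; exists t => //; rewrite mem_iota; clear -t0 tG'; lia.
  have -> : t = Gu by clear -tG tG'; lia.
  by rewrite -Guh betaN.
have ptsv t : (t <= Gv)%N -> cv + t%:R * hv \in sN.
  move=> tG; case: (ltnP 0 t) => t0; last first.
    have -> : t = 0%N by clear -t0; lia.
    by rewrite mul0r addr0 betaN.
  case: (ltnP t Gv) => tG'.
    by apply: EvN; apply/mapP; exists t => //; rewrite mem_iota; clear -t0 tG'; lia.
  have -> : t = Gv by clear -tG tG'; lia.
  by rewrite -Gvh betaN.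
have sbeta : size beta = k by rewrite /beta /beta_k size_map size_iota.
have hnb : (count (fun x => x \notin beta) gamma <= size alpha)%N.
  rewrite -size_filter; apply: uniq_leq_size; first exact: filter_uniq.
  move=> x; rewrite mem_filter => /andP[xb xg]; move: xg.
  by rewrite ga mem_cat (negbTE xb) orbF.
have hc3 : (count (fun x => ~~ op u x && ~~ op v x && (x \notin beta)) gamma
    + count (op u) gamma + count (op v) gamma <= count (fun x => x \notin beta) gamma)%N.
  apply: count3 => x /=.
  case hux: (op u x); case hvx: (op v x) => /=.
  - exfalso; move: hux hvx; rewrite opu opv => /andP[_ a] /andP[b _].
    by move: (lt_le_trans a (le_trans dcv (ltW b))); rewrite ltxx.
  - case xb: (x \in beta) => //=.
    by move: (@beta_not_open u x (ltnW u2) xb); rewrite hux.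
  - have v1 : (1 <= v)%N by case/andP: n4.
    case xb: (x \in beta) => //=.
    by move: (@beta_not_open v x v1 xb); rewrite hvx.
  - by case: (x \in beta).
have hsize : (size (undup alpha0) <= n - size beta)%N.
  apply: leq_trans (size_undup _) _.
  rewrite /alpha0 !size_cat !size_map !size_iota size_filter.
  rewrite sbeta in sa; rewrite n8 addnA; apply: leq_trans hc3 _; exact: leq_trans hnb sa.
have QE := H3 (undup alpha0) (undup_uniq _) hsize.
rewrite -/sN !qe_eq in QE.
have gne : gamma != [::] by case: (gamma) (hbg _ cub).
have sNne : sN != [::] by case: (sN) (betaN _ cub).
have ptw x : ~~ op u x -> ~~ op v x -> dist2 gamma x = dist2 sN x.
  move=> xu xv; apply: dist2_eq => //.
  - apply: (@swap_pts gamma sN x cu du cv dv); rewrite ?betaN //.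
    move=> a ag; case: (boolP (op u a)) => au; first by apply: Or32.
    case: (boolP (op v a)) => av; first by apply: Or33.
    case: (boolP (a \in beta)) => ab; first by apply: Or31; rewrite betaN.
    apply: Or31; apply: restN; rewrite mem_filter ag au av ab.
    done.
  - apply: (@swap_pts sN gamma x cu du cv dv); rewrite ?hbg //.
    move=> a /memN [ar|ae|ae|ab].
    + by apply: Or31; move: ar; rewrite mem_filter => /andP[].
    + by apply: Or32; apply: Euop.
    + by apply: Or33; apply: Evop.
    + by apply: Or31; rewrite hbg.
have mg := dist2_meas setT gamma.
have mN := dist2_meas setT sN.
have g0 : forall x, 0 <= dist2 gamma x by move=> x; exact: dist2_ge0.
have N0 : forall x, 0 <= dist2 sN x by move=> x; exact: dist2_ge0.
have hcu := ltW cdu; have hcv := ltW cdv.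
rewrite (@split5 (dist2 gamma) cu du cv dv mg g0 c0 hcu dcv hcv d1) in QE.
rewrite (@split5 (dist2 sN) cu du cv dv mN N0 c0 hcu dcv hcv d1) in QE.
have EX : (Iab 0 cu (dist2 gamma) + Iab du cv (dist2 gamma) + Iab dv 1 (dist2 gamma) =
    Iab 0 cu (dist2 sN) + Iab du cv (dist2 sN) + Iab dv 1 (dist2 sN))%E.
  congr (_ + _ + _)%E; apply: Iab_eq => x /andP[h1 h2]; apply: ptw; rewrite ?opu ?opv; apply: notop.
  - by left.
  - by left; apply: (le_trans h2); apply: (le_trans (ltW cdu)).
  - by right.
  - by left.
  - by right; apply: (le_trans dcv); apply: (le_trans (ltW cdv)).
  - by right.
rewrite -EX in QE.
set X := (Iab 0 cu (dist2 gamma) + Iab du cv (dist2 gamma) + Iab dv 1 (dist2 gamma))%E in QE EX.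
have Au : ((L ^+ 3 / (12 * (mu_.+1)%:R ^+ 2))%:E <= Iab cu du (dist2 gamma))%E.
  have := @lowerB mu_ gamma cu du hcu (hbg _ cub) (hbg _ dub) (leqnn _).
  by have -> : du - cu = L by rewrite duL; ring.
have Av : ((L ^+ 3 / (12 * (mv.+1)%:R ^+ 2))%:E <= Iab cv dv (dist2 gamma))%E.
  have := @lowerB mv gamma cv dv hcv (hbg _ cvb) (hbg _ dvb) (leqnn _).
  by have -> : dv - cv = L by rewrite dvL; ring.
have Bu : (Iab cu du (dist2 sN) <= (Gu%:R * hu ^+ 3 / 12)%:E)%E.
  rewrite {1}Guh; apply: upperC => //; first exact: ltW.
  move=> t tG x hx; rewrite /g2 le_min; apply/andP; split; apply: dist2_le; apply: ptsu.
    exact: ltnW.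
  exact: tG.
have Bv : (Iab cv dv (dist2 sN) <= (Gv%:R * hv ^+ 3 / 12)%:E)%E.
  rewrite {1}Gvh; apply: upperC => //; first exact: ltW.
  move=> t tG x hx; rewrite /g2 le_min; apply/andP; split; apply: dist2_le; apply: ptsv.
    exact: ltnW.
  exact: tG.
have X0 : (0 <= X)%E by rewrite /X; apply: adde_ge0; [apply: adde_ge0|]; apply: Iab_ge0.
have oneg : 1 \in gamma by rewrite -ptk; apply: hbg; apply: beta_mem; rewrite leqnn andbT.
have Xfin : X \is a fin_num.
  rewrite ge0_fin_numE //.
  apply: (@le_lt_trans _ _ (Iab 0 1 (fun x => (x - 1) ^+ 2))); last first.
    by rewrite int_sq // ltry.
  apply: (@le_trans _ _ (Iab 0 1 (dist2 gamma))).
    rewrite (@split5 (dist2 gamma) cu du cv dv mg g0 c0 hcu dcv hcv d1) -/X.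
    by apply: leeDl; apply: adde_ge0; exact: Iab_ge0.
  apply: Iab_le => //; first exact: msq.
  move=> x _; exact: dist2_le.
have real_lt : Gu%:R * hu ^+ 3 / 12 + Gv%:R * hv ^+ 3 / 12 <
    L ^+ 3 / (12 * (mu_.+1)%:R ^+ 2) + L ^+ 3 / (12 * (mv.+1)%:R ^+ 2).
  have -> : Gu%:R * hu ^+ 3 / 12 + Gv%:R * hv ^+ 3 / 12 =
      L ^+ 3 / 12 * ((Gu%:R ^+ 2 : R)^-1 + (Gv%:R ^+ 2 : R)^-1).
    by rewrite /hu /hv; field; rewrite !gt_eqF.
  have -> : L ^+ 3 / (12 * (mu_.+1)%:R ^+ 2) + L ^+ 3 / (12 * (mv.+1)%:R ^+ 2) =
      L ^+ 3 / 12 * (((mu_.+1)%:R ^+ 2 : R)^-1 + ((mv.+1)%:R ^+ 2 : R)^-1).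
    by field; rewrite !(addrC 1) !natr1 !pnatr_eq0.
  by rewrite ltr_pM2l // divr_gt0 // exprn_gt0.
have : (X + (Iab cu du (dist2 gamma) + Iab cv dv (dist2 gamma)) <
        X + (Iab cu du (dist2 gamma) + Iab cv dv (dist2 gamma)))%E.
  apply: (le_lt_trans QE).
  apply: (@le_lt_trans _ _ (X + (Gu%:R * hu ^+ 3 / 12 + Gv%:R * hv ^+ 3 / 12)%:E)%E).
    by rewrite leeD2l // EFinD leeD.
  apply: (@lt_le_trans _ _ (X + (L ^+ 3 / (12 * (mu_.+1)%:R ^+ 2) + L ^+ 3 / (12 * (mv.+1)%:R ^+ 2))%:E)%E).
    by rewrite lteD2lE // lte_fin.
  by rewrite leeD2l // EFinD leeD.
by rewrite ltxx.
Qed.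

End P1.

Local Close Scope classical_set_scope.

Theorem lemma4p2 (R : realType) (k n : nat) (gamma : seq R) :
  (1 <= k)%N -> (k <= n)%N ->
  cond_opt_set (unif01 R) (beta_k R k) n gamma ->
  forall i j : nat, (2 <= i)%N -> (i < j)%N -> (j <= k)%N ->
  `|(cardJ k i gamma)%:Z - (cardJ k j gamma)%:Z| \in [:: 0%Z; 1%Z].
Proof.
move=> k1 kn H i j i2 ij jk.
have H' := H.
move: H' => [ug [alpha [_ _ ga]] _ _].
have hbg : {subset beta_k R k <= gamma} by move=> y yb; rewrite ga mem_cat yb orbT.
have cardE u : (2 <= u)%N -> (u <= k)%N -> cardJ k u gamma = (count (op R k u) gamma).+2.
  move=> u2 uk.
  have cd : pt R k u.-1 < pt R k u by rewrite (@pt_lt R k k1); lia.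
  rewrite /cardJ size_filter (@count3eq R k k1 (inJ k u) (op R k u) (pred1 (pt R k u.-1)) (pred1 (pt R k u))).
    rewrite !count_uniq_mem // !hbg; first by rewrite !addn1.
    - apply: (@beta_mem R k k1 u); lia.
    - apply: (@beta_mem R k k1 u.-1); lia.
  move=> x; rewrite /inJ /op /= -/(pt R k u.-1) -/(pt R k u).
  case: (ltgtP x (pt R k u.-1)) => [xc|cx|->] /=.
  - by rewrite (lt_eqF (lt_trans xc cd)).
  - by case: (ltgtP x (pt R k u)).
  - by rewrite (lt_eqF cd) (ltW cd).
rewrite !cardE //; try lia.
set mi := count (op R k i) gamma; set mj := count (op R k j) gamma.
have hij : (mi <= mj.+1)%N.
  rewrite leqNgt; apply/negP => h.
  apply: (@key R k k1 n gamma i j mi mj.+2 H) => //; try lia.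
  have := @conv R (mj.+1)%:R mi%:R.
  rewrite !natr1; apply; rewrite ?ler1n ?ler_nat //.
have hji : (mj <= mi.+1)%N.
  rewrite leqNgt; apply/negP => h.
  apply: (@key R k k1 n gamma i j mi.+2 mj H) => //; try lia.
  have := @conv R (mi.+1)%:R mj%:R.
  rewrite !natr1 (addrC (_ ^-1)) [X in _ < X](addrC (_ ^-1)); apply; rewrite ?ler1n ?ler_nat //.
have [e|[e|e]] : mi = mj \/ mi = mj.+1 \/ mj = mi.+1 by lia.
- by rewrite e subrr normr0 inE eqxx.
- have -> : (mi.+2)%:Z - (mj.+2)%:Z = 1 by rewrite e; lia.
  by rewrite normr1 !inE eqxx orbT.
- have -> : (mi.+2)%:Z - (mj.+2)%:Z = - 1 by rewrite e; lia.
  by rewrite normrN normr1 !inE eqxx orbT.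
Qed.
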